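(* Let $(X,\mathcal{A})$ be a measurable space, $f,g\in\mathcal{F}^{(X,\mathcal{A})}$ comonotone, $\otimes:[0,\infty]^2\to[0,\infty]$ a pseudo-multiplication with neutral element $e\in(0,\infty]$, and $m\in\mathcal{M}^{(X,\mathcal{A})}$ a monotone measure with $a\otimes m(X)\le a$ for all $a\in[0,\infty]$. Let $U_0,U_1,U_2:[0,\infty)\to[0,\infty)$ be continuous strictly increasing with $\mathbf{I}_\otimes(m,U_1(f))<\infty$ and $\mathbf{I}_\otimes(m,U_2(g))<\infty$. Let $\star:[0,\infty)^2\to[0,\infty)$ be continuous and non-decreasing in both arguments and $\psi:[0,\infty)\to[0,\infty)$ continuous and strictly increasing. If for all $a,b\in[0,\infty)$, $c\in[0,\infty]$, \[ U_0^{-1}\big[U_0(\psi(a)\star\psi(b))\otimes c\big]\ \ge\ \big[\psi\big(U_1^{-1}[U_1(a)\otimes c]\big)\star\psi(b)\big]\vee\big[\psi(a)\star\psi\big(U_2^{-1}[U_2(b)\otimes c]\big)\big], \] then \[ U_0^{-1}\big[\mathbf{I}_\otimes\big(m,U_0[\psi(f)\star\psi(g)]\big)\big]\ \ge\ \psi\big(U_1^{-1}(\mathbf{I}_\otimes(m,U_1(f)))\big)\star\psi\big(U_2^{-1}(\mathbf{I}_\otimes(m,U_2(g)))\big). \]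
   Context: A monotone measure on $(X,\mathcal{A})$ is $m:\mathcal{A}\to[0,\infty]$ with $m(\emptyset)=0$, $m(X)>0$, $m(A)\le m(B)$ for $A\subseteq B$; $\mathcal{M}^{(X,\mathcal{A})}$ is the set of these; $\mathcal{F}^{(X,\mathcal{A})}$ the set of $\mathcal{A}$-measurable $f:X\to[0,\infty]$. A pseudo-multiplication is $\otimes:[0,\infty]^2\to[0,\infty]$, non-decreasing in each component, with annihilator $0$ and a neutral element $e\in(0,\infty]$. $\mathbf{I}_\otimes(m,f)=\sup\{t\otimes m(\{f\ge t\}) : t\in(0,\infty]\}$. $f,g$ are comonotone if $(f(x)-f(y))(g(x)-g(y))\ge0$ for all $x,y$. Operations on functions are pointwise. *)

(* Defs.v *)
From HB Require Import structures.
From mathcomp Require Import all_boot all_order all_algebra.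
From mathcomp Require Import all_classical all_reals all_analysis.
Set Implicit Arguments. Unset Strict Implicit. Unset Printing Implicit Defensive.
Import Order.TTheory GRing.Theory Num.Theory.
Import numFieldNormedType.Exports.
Local Open Scope classical_set_scope.
Local Open Scope ring_scope.
Local Open Scope ereal_scope.

Definition is_pseudo_mult {R : realType} (pm : \bar R -> \bar R -> \bar R)
    (e : \bar R) : Prop :=
  [/\ (forall a b, 0 <= a -> 0 <= b -> 0 <= pm a b),
      (forall a a' b b', 0 <= a -> a <= a' -> 0 <= b -> b <= b' ->
          pm a b <= pm a' b'),
      (forall a, 0 <= a -> pm 0 a = 0 /\ pm a 0 = 0),
      0 < e &
      (forall a, 0 <= a -> pm e a = a /\ pm a e = a)].

Definition is_monotone_measure {d} {T : measurableType d} {R : realType}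
    (m : set T -> \bar R) : Prop :=
  [/\ m set0 = 0, 0 < m setT,
      (forall A, measurable A -> 0 <= m A) &
      (forall A B, measurable A -> measurable B -> A `<=` B -> m A <= m B)].

Definition Iint {d} {T : measurableType d} {R : realType}
    (pm : \bar R -> \bar R -> \bar R) (m : set T -> \bar R)
    (h : T -> \bar R) : \bar R :=
  ereal_sup [set pm t (m [set x | t <= h x]) | t in [set t : \bar R | 0 < t]].

(** Inverse of a (continuous, strictly increasing) U : [0,oo) -> [0,oo),
    extended to [0,oo] as the generalized inverse
    U^{-1}(y) = sup ({0} u {x in [0,oo) | U x <= y}). *)
Definition Uinv {R : realType} (U : R -> R) (y : \bar R) : \bar R :=
  ereal_sup ([set 0] `|`
    [set (x%:E) | x in [set x : R | (0 <= x)%R /\ (U x)%:E <= y]]).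

(** Monotone (left-continuous) extension of psi : [0,oo) -> [0,oo) to [0,oo]. *)
Definition psiE {R : realType} (psi : R -> R) (y : \bar R) : \bar R :=
  ereal_sup [set (psi x)%:E | x in [set x : R | (0 <= x)%R /\ x%:E <= y]].

(** Monotone extension of star : [0,oo)^2 -> [0,oo) to [0,oo]^2. *)
Definition starE {R : realType} (star : R -> R -> R) (a b : \bar R) : \bar R :=
  ereal_sup [set (star p.1 p.2)%:E | p in
    [set p : R * R | [/\ (0 <= p.1)%R, (0 <= p.2)%R, p.1%:E <= a & p.2%:E <= b]]].

Definition cont_strict_incr {R : realType} (U : R -> R) : Prop :=
  [/\ (forall x, (0 <= x)%R -> (0 <= U x)%R),
      {within [set x : R | (0 <= x)%R], continuous U} &
      (forall x y, (0 <= x)%R -> (x < y)%R -> (U x < U y)%R)].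

(* Main.v *)
Require Import Defs.
From HB Require Import structures.
From mathcomp Require Import all_boot all_order all_algebra.
From mathcomp Require Import all_classical all_reals all_analysis.
From mathcomp Require Import lra.
Import Order.TTheory GRing.Theory Num.Theory.
Import numFieldNormedType.Exports.
Local Open Scope classical_set_scope.
Local Open Scope ring_scope.
Local Open Scope ereal_scope.

Set Implicit Arguments. Unset Strict Implicit.
Section Helpers.
Context {R : realType}.

Lemma within_cont_lt (h : R * R -> R) (A : set (R * R)) p w :
  {within A, continuous h} -> A p -> (w < h p)%R ->
  exists2 e : R, (0 < e)%R & forall q, A q -> (`|p.1 - q.1| < e)%R ->
     (`|p.2 - q.2| < e)%R -> (w < h q)%R.
Proof.
move=> hc Ap wh.
have hc' := (subspace_continuousP _ _).1 hc p Ap.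
have : \forall y \near h p, (w < y)%R by exact: lt_nbhsr.
move/hc' => /=.
rewrite /within /= nbhs_simpl.
move/nbhs_ballP => [e e0 He].
exists e => // q Aq d1 d2.
by apply: He => //.
Qed.

Lemma within_cont_lt1 (h : R -> R) (A : set R) p w :
  {within A, continuous h} -> A p -> (w < h p)%R ->
  exists2 e : R, (0 < e)%R & forall q, A q -> (`|p - q| < e)%R -> (w < h q)%R.
Proof.
move=> hc Ap wh.
have hc' := (subspace_continuousP _ _).1 hc p Ap.
have : \forall y \near h p, (w < y)%R by exact: lt_nbhsr.
move/hc' => /=.
rewrite /within /= nbhs_simpl.
move/nbhs_ballP => [e e0 He].
exists e => // q Aq d1.
by apply: He => //.
Qed.

Lemma csi_le (U : R -> R) x y : cont_strict_incr U -> (0 <= x)%R -> (x <= y)%R ->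
  (U x <= U y)%R.
Proof.
move=> [_ _ Ui] x0; rewrite le_eqVlt => /orP[/eqP->//|xy].
exact/ltW/Ui.
Qed.

Lemma csi_lt (U : R -> R) x y : cont_strict_incr U -> (0 <= y)%R ->
  (U x < U y)%R -> (x < y)%R.
Proof.
move=> hU y0 Uxy; rewrite ltNge; apply/negP => yx.
by move: Uxy; rewrite ltNge (csi_le hU y0 yx).
Qed.

Lemma csi_ge0 (U : R -> R) x : cont_strict_incr U -> (0 <= x)%R -> (0 <= U x)%R.
Proof. by move=> [+ _ _]; apply. Qed.

Lemma csi_prev (U : R -> R) x1 q : cont_strict_incr U -> (0 < x1)%R -> (q < U x1)%R ->
  exists x0, [/\ (0 <= x0)%R, (x0 < x1)%R & (q < U x0)%R].
Proof.
move=> [_ Uc _] x10 qU.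
have [e e0 He] := within_cont_lt1 Uc (ltW x10) qU.
pose d := Num.min x1 e.
have d0 : (0 < d)%R by rewrite lt_min x10 e0.
exists (x1 - d / 2)%R; split.
- have : (d <= x1)%R by rewrite ge_min lexx.
  lra.
- lra.
- apply: He.
    have : (d <= x1)%R by rewrite ge_min lexx.
    rewrite /=; lra.
  have : (d <= e)%R by rewrite ge_min lexx orbT.
  rewrite opprB addrC subrK ger0_norm; lra.
Qed.

Lemma Uinv_ge0 (U : R -> R) y : 0 <= Uinv U y.
Proof. by apply: ereal_sup_ubound; left. Qed.

Lemma Uinv_ge (U : R -> R) x y : (0 <= x)%R -> (U x)%:E <= y -> x%:E <= Uinv U y.
Proof. by move=> x0 Uxy; apply: ereal_sup_ubound; right; exists x. Qed.

Lemma Uinv_le (U : R -> R) y y' : y <= y' -> Uinv U y <= Uinv U y'.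
Proof.
move=> yy'; apply: ereal_sup_le => z [->|[x [x0 Uxy] <-]]; first by left.
by right; exists x => //; split => //; exact: le_trans Uxy yy'.
Qed.

Lemma Uinv_lt (U : R -> R) x y : (0 <= x)%R -> x%:E < Uinv U y ->
  exists2 x', (x < x')%R & (U x')%:E <= y.
Proof.
move=> x0 /ereal_sup_gt [z [->|[x' [x'0 Ux'] <-]] xz].
  by move: xz; rewrite lte_fin ltNge x0.
by exists x' => //; rewrite -lte_fin.
Qed.

Lemma psiE_ge (psi : R -> R) x y : (0 <= x)%R -> x%:E <= y -> (psi x)%:E <= psiE psi y.
Proof. by move=> *; apply: ereal_sup_ubound; exists x. Qed.

Lemma psiE_lt (psi : R -> R) p y : p%:E < psiE psi y ->
  exists x, [/\ (0 <= x)%R, x%:E <= y & (p < psi x)%R].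
Proof. by move/ereal_sup_gt => [z [x [x0 xy] <-] pz]; exists x; split => //; rewrite -lte_fin. Qed.

Lemma starE_ge (star : R -> R -> R) p1 p2 a b : (0 <= p1)%R -> (0 <= p2)%R ->
  p1%:E <= a -> p2%:E <= b -> (star p1 p2)%:E <= starE star a b.
Proof. by move=> *; apply: ereal_sup_ubound; exists (p1, p2). Qed.

Lemma Iint_ge {d} {T : measurableType d} pm (m : set T -> \bar R) h t : 0 < t ->
  pm t (m [set x | t <= h x]) <= Iint pm m h.
Proof. by move=> t0; apply: ereal_sup_ubound; exists t. Qed.

Lemma Iint_lt {d} {T : measurableType d} pm (m : set T -> \bar R) h y :
  y < Iint pm m h -> exists2 t, 0 < t & y < pm t (m [set x | t <= h x]).
Proof. by move/ereal_sup_gt => [z [t t0 <-] yz]; exists t. Qed.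

End Helpers.

Section Meas.
Context {d : measure_display} {T : measurableType d} {R : realType}.
Local Open Scope ring_scope.

Lemma meas_pre (f : T -> R) (B : set R) : measurable_fun setT f -> measurable B ->
  measurable (f @^-1` B).
Proof. by move=> mf mB; have := mf measurableT B mB; rewrite setTI. Qed.

Lemma meas_ge (f : T -> R) a : measurable_fun setT f -> measurable [set x | a <= f x].
Proof.
move=> mf; have := meas_pre mf (measurable_itv `[a, +oo[).
congr measurable; apply/seteqP; split => x /=; by rewrite in_itv /= andbT.
Qed.

Lemma meas_gt (f : T -> R) a : measurable_fun setT f -> measurable [set x | a < f x].
Proof.
move=> mf; have := meas_pre mf (measurable_itv `]a, +oo[).
congr measurable; apply/seteqP; split => x /=; by rewrite in_itv /= andbT.
Qed.

Lemma meas_eq (f : T -> R) a : measurable_fun setT f -> measurable [set x | f x = a].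
Proof. by move=> mf; exact: (meas_pre mf (measurable_set1 a)). Qed.

Lemma comono_incl (f g : T -> R) a b :
  (forall x y, 0 <= (f x - f y) * (g x - g y)) ->
  [set x | a <= f x] `<=` [set x | b <= g x] \/ [set x | b <= g x] `<=` [set x | a <= f x].
Proof.
move=> co.
case: (pselect ([set x | a <= f x] `<=` [set x | b <= g x])) => [|nAB]; [by left|right].
move=> y /= gy; rewrite leNgt; apply/negP => fya.
apply: nAB => x /= fx; rewrite leNgt; apply/negP => gxb.
have := co x y; nra.
Qed.

Lemma upper_meas (f g : T -> R) (P : set T) :
  measurable_fun setT f -> measurable_fun setT g ->
  (forall x, 0 <= f x) -> (forall x, 0 <= g x) ->
  (forall x y, 0 <= (f x - f y) * (g x - g y)) ->
  (forall x y, P x -> f x <= f y -> g x <= g y -> P y) -> measurable P.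
Proof.
move=> mf mg f0 g0 co Pup.
case: (pselect (exists x, P x)) => [[x0 Px0]|nP]; last first.
  rewrite (_ : P = set0); first exact: measurable0.
  by apply/seteqP; split => x // Px; apply: nP; exists x.
pose a0 := inf (f @` P); pose b0 := inf (g @` P).
have lbf : has_lbound (f @` P) by exists 0 => _ [x _ <-].
have lbg : has_lbound (g @` P) by exists 0 => _ [x _ <-].
have nef : (f @` P) !=set0 by exists (f x0), x0.
have neg : (g @` P) !=set0 by exists (g x0), x0.
have Pf : forall x, P x -> a0 <= f x by move=> x Px; apply: ge_inf => //; exists x.
have Pg : forall x, P x -> b0 <= g x by move=> x Px; apply: ge_inf => //; exists x.
have P1 : forall y, a0 < f y -> P y.
  move=> y /(inf_lt nef) [_ [x Px <-] fxy].
  apply: (Pup x y Px (ltW fxy)); have := co x y; nra.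
have P2 : forall y, b0 < g y -> P y.
  move=> y /(inf_lt neg) [_ [x Px <-] gxy].
  apply: (Pup x y Px _ (ltW gxy)); have := co x y; nra.
have mU : measurable ([set x | a0 < f x] `|` [set x | b0 < g x]).
  by apply: measurableU; [exact: meas_gt|exact: meas_gt].
case: (pselect (exists z, [/\ P z, f z = a0 & g z = b0])) => [[z [Pz fz gz]]|nz].
  rewrite (_ : P = ([set x | a0 < f x] `|` [set x | b0 < g x]) `|`
                   ([set x | f x = a0] `&` [set x | g x = b0])).
    by apply: measurableU => //; apply: measurableI; exact: meas_eq.
  apply/seteqP; split => x.
    move=> Px; have := Pf x Px; have := Pg x Px.
    rewrite le_eqVlt => /orP[/eqP gx|gx]; rewrite le_eqVlt => /orP[/eqP fx|fx].
    - by right; split.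
    - by left; left.
    - by left; right.
    - by left; left.
  move=> [[/P1|/P2]//|[/= fx gx]].
  by apply: (Pup z x Pz); [rewrite fz fx|rewrite gz gx].
rewrite (_ : P = ([set x | a0 < f x] `|` [set x | b0 < g x])) //.
apply/seteqP; split => x; last by move=> [/P1|/P2].
move=> Px; have := Pf x Px; have := Pg x Px.
rewrite le_eqVlt => /orP[/eqP gx|gx]; rewrite le_eqVlt => /orP[/eqP fx|fx].
- by exfalso; apply: nz; exists x.
- by left.
- by right.
- by left.
Qed.

End Meas.

Section Coord.
Context {d : measure_display} {T : measurableType d} {R : realType}.

Lemma coord (pm : \bar R -> \bar R -> \bar R) (e : \bar R) (m : set T -> \bar R)
  (U psi : R -> R) (f : T -> R) (q : R) :
  is_pseudo_mult pm e -> is_monotone_measure m ->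
  (forall a : \bar R, 0 <= a -> pm a (m setT) <= a) ->
  measurable_fun setT f -> (forall x, (0 <= f x)%R) ->
  cont_strict_incr U -> cont_strict_incr psi -> (0 <= q)%R ->
  (q <= psi 0)%R \/ q%:E < psiE psi (Uinv U (Iint pm m (fun x => (U (f x))%:E))) ->
  exists a, [/\ (0 <= a)%R, (q <= psi a)%R &
     q%:E <= psiE psi (Uinv U (pm (U a)%:E (m [set x | (a <= f x)%R])))].
Proof.
move=> [pm0 pmm pmz e0 pme] [m0 mT mge0 mmono] pmX mf f0 hU hpsi q0.
have triv : (q <= psi 0)%R -> exists a, [/\ (0 <= a)%R, (q <= psi a)%R &
     q%:E <= psiE psi (Uinv U (pm (U a)%:E (m [set x | (a <= f x)%R])))].
  move=> qle; exists 0%R; split => //.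
  apply: le_trans (psiE_ge _ (lexx 0%R) (Uinv_ge0 _ _)); by rewrite lee_fin.
case=> [|qlt]; first exact: triv.
have [x1 [x10 x1u qx1]] := psiE_lt qlt.
have [x1z|x1pos] := eqVneq x1 0%R.
  by apply: triv; rewrite -x1z ltW.
have x1p : (0 < x1)%R by rewrite lt_neqAle eq_sym x1pos x10.
have [x0 [x00 x0x1 qx0]] := csi_prev hpsi x1p qx1.
have x0u : x0%:E < Uinv U (Iint pm m (fun x => (U (f x))%:E)).
  by apply: lt_le_trans x1u; rewrite lte_fin.
have [x' x0x' Ux'] := Uinv_lt x00 x0u.
have UF : (U x0)%:E < Iint pm m (fun x => (U (f x))%:E).
  by apply: lt_le_trans Ux'; rewrite lte_fin; case: hU => _ _; apply.
have [t t0 Ut] := Iint_lt UF.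
have Ux00 : (0 <= U x0)%R := csi_ge0 hU x00.
have emptyc : forall S, S = set0 -> pm t (m S) = 0.
  by move=> S ->; rewrite m0; case: (pmz t (ltW t0)).
case: t t0 Ut emptyc => [r| |] // r0 Ut emptyc; last first.
  move: Ut; rewrite emptyc ?lte_fin ?ltNge ?Ux00 //.
  by apply/seteqP; split => x //=; rewrite leNgt ltey.
case: (pselect (exists z, (r <= U (f z))%R)) => [[z rz]|nz]; last first.
  move: Ut; rewrite emptyc ?lte_fin ?ltNge ?Ux00 //.
  by apply/seteqP; split => x //=; rewrite lee_fin => rx; apply: nz; exists x.
have mT' : measurable (@setT T) by exact: measurableT.
have U0r : (U 0 < r)%R.
  rewrite ltNge; apply/negP => rU0.
  move: Ut; rewrite (_ : [set x | r%:E <= (U (f x))%:E] = setT); last first.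
    apply/seteqP; split => x //= _; rewrite lee_fin.
    by apply: le_trans rU0 _; apply: csi_le hU (lexx 0%R) (f0 x).
  move=> Ut.
  have rx0 : r%:E <= (U x0)%:E.
    by rewrite lee_fin; apply: le_trans rU0 _; apply: csi_le hU (lexx 0%R) x00.
  have := lt_le_trans Ut (le_trans (pmX _ (ltW r0)) rx0).
  by rewrite ltxx.
have [a aI Ua] : exists2 a, a \in `[0%R, f z] & U a = r.
  apply: IVT => //.
    apply: continuous_subspaceW (let: And3 _ c _ := hU in c).
    by move=> y; rewrite /= in_itv /= => /andP[].
  have UU : (U 0 <= U (f z))%R by apply: csi_le hU (lexx 0%R) (f0 z).
  by rewrite (min_l UU) (max_r UU) (ltW U0r) rz.
have a0 : (0 <= a)%R by move: aI; rewrite in_itv /= => /andP[].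
have eqS : [set x | r%:E <= (U (f x))%:E] = [set x | (a <= f x)%R].
  apply/seteqP; split => x /=; rewrite lee_fin -Ua.
    move=> h; rewrite leNgt; apply/negP => fa.
    have := (let: And3 _ _ Ui := hU in Ui) _ _ (f0 x) fa.
    by rewrite ltNge h.
  by move=> h; apply: csi_le hU a0 h.
rewrite eqS -Ua in Ut.
have mA := meas_ge a mf.
have Ule : pm (U a)%:E (m [set x | (a <= f x)%R]) <= (U a)%:E.
  have Ua0 : 0 <= (U a)%:E by rewrite lee_fin; exact: csi_ge0 hU a0.
  apply: le_trans (pmX _ Ua0).
  apply: pmm => //.
    exact: mge0.
  exact: mmono.
have x0a : (x0 < a)%R.
  apply: (csi_lt hU a0); rewrite -lte_fin; exact: lt_le_trans Ut Ule.
exists a; split => //.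
  exact/ltW/(lt_le_trans qx0)/(csi_le hpsi x00 (ltW x0a)).
apply: le_trans (psiE_ge _ x00 (Uinv_ge x00 (ltW Ut))).
by rewrite lee_fin ltW.
Qed.

End Coord.

Theorem corollary3p1 (d : measure_display) (T : measurableType d) (R : realType)
  (f g : T -> R) (pm : \bar R -> \bar R -> \bar R) (e : \bar R)
  (m : set T -> \bar R) (U0 U1 U2 psi : R -> R) (star : R -> R -> R) :
  measurable_fun setT f -> measurable_fun setT g ->
  (forall x, (0 <= f x)%R) -> (forall x, (0 <= g x)%R) ->
  (forall x y, (0 <= (f x - f y) * (g x - g y))%R) ->
  is_pseudo_mult pm e ->
  is_monotone_measure m ->
  (forall a : \bar R, 0 <= a -> pm a (m setT) <= a) ->
  cont_strict_incr U0 -> cont_strict_incr U1 -> cont_strict_incr U2 ->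
  Iint pm m (fun x => (U1 (f x))%:E) < +oo ->
  Iint pm m (fun x => (U2 (g x))%:E) < +oo ->
  (forall a b, (0 <= a)%R -> (0 <= b)%R -> (0 <= star a b)%R) ->
  {within [set p : R * R | (0 <= p.1)%R /\ (0 <= p.2)%R],
     continuous (fun p : R * R => star p.1 p.2)} ->
  (forall a a' b b', (0 <= a)%R -> (a <= a')%R -> (0 <= b)%R -> (b <= b')%R ->
     (star a b <= star a' b')%R) ->
  cont_strict_incr psi ->
  (forall (a b : R) (c : \bar R), (0 <= a)%R -> (0 <= b)%R -> 0 <= c ->
     maxe (starE star (psiE psi (Uinv U1 (pm (U1 a)%:E c))) (psi b)%:E)
          (starE star (psi a)%:E (psiE psi (Uinv U2 (pm (U2 b)%:E c))))
     <= Uinv U0 (pm (U0 (star (psi a) (psi b)))%:E c)) ->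
  starE star (psiE psi (Uinv U1 (Iint pm m (fun x => (U1 (f x))%:E))))
             (psiE psi (Uinv U2 (Iint pm m (fun x => (U2 (g x))%:E))))
  <= Uinv U0 (Iint pm m (fun x => (U0 (star (psi (f x)) (psi (g x))))%:E)).
Proof.
move=> mf mg f0 g0 co pmH mH pmX hU0 hU1 hU2 _ _ star0 starc starm hpsi hyp.
have [pm0 pmm pmz e0 pme] := pmH.
have [m0 mT mge0 mmono] := mH.
set H := Iint pm m (fun x => (U0 (star (psi (f x)) (psi (g x))))%:E).
have psi00 : (0 <= psi 0)%R := csi_ge0 hpsi (lexx 0%R).
have psige0 : forall x, (0 <= x)%R -> (0 <= psi x)%R by move=> x; exact: csi_ge0 hpsi.
have core : forall a b q1 q2, (0 <= a)%R -> (0 <= b)%R -> (0 <= q1)%R -> (0 <= q2)%R ->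
    (q1 <= psi a)%R -> q1%:E <= psiE psi (Uinv U1 (pm (U1 a)%:E (m [set x | (a <= f x)%R]))) ->
    (q2 <= psi b)%R -> q2%:E <= psiE psi (Uinv U2 (pm (U2 b)%:E (m [set x | (b <= g x)%R]))) ->
    (star q1 q2)%:E <= Uinv U0 H.
  move=> a b q1 q2 a0 b0 q10 q20 q1a q1A q2b q2B.
  set s := star (psi a) (psi b).
  have s0 : (0 <= s)%R by apply: star0; apply: psige0.
  have key : forall C, C `<=` [set x | (a <= f x)%R /\ (b <= g x)%R] -> measurable C ->
      Uinv U0 (pm (U0 s)%:E (m C)) <= Uinv U0 H.
    move=> C CS mC; apply: Uinv_le.
    have [Us0|Us0] := eqVneq (U0 s) 0%R.
      rewrite Us0; have [-> _] := pmz _ (mge0 _ mC).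
      apply: le_trans (Iint_ge pm m (fun x => (U0 (star (psi (f x)) (psi (g x))))%:E) (ltry 0%R)).
      rewrite (_ : [set x | +oo <= _] = set0); last first.
        by apply/seteqP; split => x //=; rewrite leNgt ltey.
      by rewrite m0; have [_ ->] := pmz _ (leey 0).
    have Us : (0 < U0 s)%R by rewrite lt_neqAle eq_sym Us0 csi_ge0.
    have Us' : 0 < (U0 s)%:E by rewrite lte_fin.
    apply: le_trans (Iint_ge pm m (fun x => (U0 (star (psi (f x)) (psi (g x))))%:E) Us').
    have mS : measurable [set x | (U0 s)%:E <= (U0 (star (psi (f x)) (psi (g x))))%:E].
      apply: (upper_meas mf mg f0 g0 co) => x y /=; rewrite !lee_fin => h fxy gxy.
      apply: le_trans h _; apply: csi_le hU0 _ _.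
        by apply: star0; apply: psige0.
      apply: starm; try apply: psige0 => //.
        exact: csi_le hpsi (f0 x) fxy.
      exact: csi_le hpsi (g0 x) gxy.
    apply: pmm => //; first by rewrite lee_fin ltW.
      exact: mge0.
    apply: mmono => // x /CS [fx gx] /=; rewrite lee_fin.
    apply: csi_le hU0 s0 _.
    apply: starm; try apply: psige0 => //.
      exact: csi_le hpsi a0 fx.
    exact: csi_le hpsi b0 gx.
  have mA := meas_ge a mf; have mB := meas_ge b mg.
  case: (comono_incl a b co) => AB.
  - apply: le_trans (key _ _ mA); last by move=> x Ax; split => //; exact: AB.
    apply: le_trans (hyp a b _ a0 b0 (mge0 _ mA)).
    rewrite le_max; apply/orP; left.
    apply: starE_ge => //; by rewrite lee_fin.
  - apply: le_trans (key _ _ mB); last by move=> x Bx; split => //; exact: AB.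
    apply: le_trans (hyp a b _ a0 b0 (mge0 _ mB)).
    rewrite le_max; apply/orP; right.
    apply: starE_ge => //; by rewrite lee_fin.
rewrite /starE; apply: ub_ereal_sup => z [[p1 p2] [/= p10 p20 p1P p2P] <-] /=.
have W0 := Uinv_ge0 U0 H.
case eqW: (Uinv U0 H) W0 => [w| |] W0 //; last by rewrite leey.
rewrite lee_fin leNgt; apply/negP => wlt.
have [ep ep0 He] := within_cont_lt starc (p := (p1, p2)) (conj p10 p20) wlt.
have approx : forall p (P : \bar R), (0 <= p)%R -> p%:E <= P ->
    exists q, [/\ (0 <= q)%R, (`|p - q| < ep)%R & (q <= psi 0)%R \/ q%:E < P].
  move=> p P p0 pP.
  case: (leP p (psi 0%R)) => hp.
    by exists p; split => //; [rewrite subrr normr0 | left].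
  case: (leP (p - ep / 2)%R (psi 0%R)) => hq.
    exists (psi 0%R); split => //; last by left.
    rewrite ger0_norm; lra.
  exists (p - ep / 2)%R; split; first by lra.
    rewrite opprB addrC subrK ger0_norm; lra.
  by right; apply: lt_le_trans pP; rewrite lte_fin; lra.
have [q1 [q10 dq1 hq1]] := approx p1 _ p10 p1P.
have [q2 [q20 dq2 hq2]] := approx p2 _ p20 p2P.
have [a [a0 q1a q1A]] := coord pmH mH pmX mf f0 hU1 hpsi q10 hq1.
have [b [b0 q2b q2B]] := coord pmH mH pmX mg g0 hU2 hpsi q20 hq2.
have := core a b q1 q2 a0 b0 q10 q20 q1a q1A q2b q2B.
rewrite eqW lee_fin leNgt => /negP; apply.
exact: (He (q1, q2)).
Qed.
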